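(* Let $n_1,n_2,n_3$ be integers with $3\le n_1,n_2\le n_3$ and $3\max(n_1,n_2)\le 2n_3\le n_1n_2$. Every set $W$ produced by the Middle Cone Construction described below is a basic landmark system for $K(\mathbf{n})$.
   Context: $K(\mathbf{n})=K_{n_1}\times K_{n_2}\times K_{n_3}$: vertices are triples $(x_1,x_2,x_3)$, $1\le x_i\le n_i$, adjacent iff they differ in every coordinate. For a vertex set $W$, $W_{i,a}=\{w\in W:w_i=a\}$. Basic landmark system: $W$ such that (1) $W_{i,a}\neq\emptyset$ for all $i\in\{1,2,3\}$, $1\le a\le n_i$; (2) $|W_{i,a}|\ge2$ for all such $i,a$; (3) $|W_{i,a}\cap W_{j,b}|\le1$ whenever $i\ne j$. Multiplicities: write $n_3=qn_1+r$, $0\le r\le n_1-1$. If $r\le n_1-r$, $(\ell_1,\dots,\ell_{n_1})$ is $(q+1,q)$ repeated $r$ times followed by $n_1-2r$ copies of $q$; if $r>n_1-r$, it is $(q+1,q)$ repeated $n_1-r$ times followed by $2r-n_1$ copies of $q+1$. Let $L_i=\sum_{j<i}\ell_j$, so block $i$ consists of columns $c$ with $L_i<c\le L_i+\ell_i$; $s_i=L_i+1$. Middle Cone Construction: $W=W^L\cup W^R$, each consisting of $n_3$ landmarks indexed by columns $c=1,\dots,n_3$. Left column $c$ in block $i$ is $(i,y^L_c,c)$; right column $c$ in block $i$ is $(i+1,y^R_c,c)$ with $n_1+1$ read as $1$. Even $n_2$, $h=n_2/2$: $y^L_c=((c-1)\bmod h)+1$, $y^R_c=h+((c-1)\bmod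 h)+1$. Odd $n_2$, $f=(n_2-1)/2$, $k=\#\{i:\ell_i>f\}$: let $S=\{s_i:\ell_i>f\}$ if $k\ge2$ and $S=\{1\}$ if $k\le1$. Set $y^L_c=n_2$ for $c\in S$ and fill the other left columns in increasing order with $1,\dots,f,1,\dots,f,\dots$; set $y^R_c=n_2$ for $c\in S+1$ and fill the other right columns in increasing order with $f+1,\dots,2f,f+1,\dots,2f,\dots$. If $k\le1$, additionally change one left landmark of the form $(x,1,z)$ with $x\notin\{1,2,n_1\}$ to $(x,n_2,z)$ (any such choice). *)

(* Defs.v *)
From mathcomp Require Import all_boot.
Set Implicit Arguments. Unset Strict Implicit. Unset Printing Implicit Defensive.

(* Vertices of K(n) = K_{n1} x K_{n2} x K_{n3}: triples ((x1, x2), x3), 1-indexed. *)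
Definition vtx := (nat * nat * nat)%type.
Definition mkv (x1 x2 x3 : nat) : vtx := (x1, x2, x3).

Definition coord (i : nat) (w : vtx) : nat :=
  match i with 1 => w.1.1 | 2 => w.1.2 | _ => w.2 end.

Definition dimn (n1 n2 n3 i : nat) : nat :=
  match i with 1 => n1 | 2 => n2 | _ => n3 end.

(* W is given as a list; the set W is its underlying set, and the sets
   W_{i,a} are counted on the duplicate-free list undup W. *)
Definition basic_landmark_system (n1 n2 n3 : nat) (W : seq vtx) : Prop :=
  (forall w, w \in W -> forall i, 1 <= i <= 3 -> 1 <= coord i w <= dimn n1 n2 n3 i) /\
  (forall i a, 1 <= i <= 3 -> 1 <= a <= dimn n1 n2 n3 i ->
     exists2 w, w \in W & coord i w = a) /\
  (forall i a, 1 <= i <= 3 -> 1 <= a <= dimn n1 n2 n3 i ->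
     2 <= count (fun w => coord i w == a) (undup W)) /\
  (forall i j a b, 1 <= i <= 3 -> 1 <= j <= 3 -> i != j ->
     1 <= a <= dimn n1 n2 n3 i -> 1 <= b <= dimn n1 n2 n3 j ->
     count (fun w => (coord i w == a) && (coord j w == b)) (undup W) <= 1).

Definition ells (n1 n3 : nat) : seq nat :=
  let q := n3 %/ n1 in let r := n3 %% n1 in
  if r <= n1 - r then flatten (nseq r [:: q.+1; q]) ++ nseq (n1 - 2 * r) q
  else flatten (nseq (n1 - r) [:: q.+1; q]) ++ nseq (2 * r - n1) q.+1.

Definition ell (n1 n3 i : nat) : nat := nth 0 (ells n1 n3) i.-1.
Definition Lsum (n1 n3 i : nat) : nat := sumn (take i.-1 (ells n1 n3)).
Definition sfirst (n1 n3 i : nat) : nat := (Lsum n1 n3 i).+1.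

Definition nxt (n1 i : nat) : nat := if i == n1 then 1 else i.+1.

Definition yL_even (n2 c : nat) : nat := let h := n2 %/ 2 in ((c - 1) %% h).+1.
Definition yR_even (n2 c : nat) : nat := let h := n2 %/ 2 in h + ((c - 1) %% h).+1.

Definition fodd (n2 : nat) : nat := (n2 - 1) %/ 2.
Definition kcount (n1 n2 n3 : nat) : nat :=
  count (fun i => fodd n2 < ell n1 n3 i) (iota 1 n1).
Definition inS (n1 n2 n3 c : nat) : bool :=
  if 2 <= kcount n1 n2 n3 then
    has (fun i => (fodd n2 < ell n1 n3 i) && (sfirst n1 n3 i == c)) (iota 1 n1)
  else c == 1.
Definition inS1 (n1 n2 n3 c : nat) : bool := (1 < c) && inS n1 n2 n3 c.-1.

(* other columns filled in increasing order cyclically: position among the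
   non-S columns 1..c *)
Definition yL_odd (n1 n2 n3 c : nat) : nat :=
  if inS n1 n2 n3 c then n2
  else (((count (fun c' => ~~ inS n1 n2 n3 c') (iota 1 c)) - 1) %% fodd n2).+1.
Definition yR_odd (n1 n2 n3 c : nat) : nat :=
  if inS1 n1 n2 n3 c then n2
  else fodd n2 + (((count (fun c' => ~~ inS1 n1 n2 n3 c') (iota 1 c)) - 1) %% fodd n2).+1.

Definition yL (n1 n2 n3 c : nat) : nat :=
  if odd n2 then yL_odd n1 n2 n3 c else yL_even n2 c.
Definition yR (n1 n2 n3 c : nat) : nat :=
  if odd n2 then yR_odd n1 n2 n3 c else yR_even n2 c.

Definition WL (n1 n2 n3 : nat) : seq vtx :=
  flatten [seq [seq mkv i (yL n1 n2 n3 c) c | c <- iota (sfirst n1 n3 i) (ell n1 n3 i)]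
          | i <- iota 1 n1].
Definition WR (n1 n2 n3 : nat) : seq vtx :=
  flatten [seq [seq mkv (nxt n1 i) (yR n1 n2 n3 c) c | c <- iota (sfirst n1 n3 i) (ell n1 n3 i)]
          | i <- iota 1 n1].

Definition modify (n2 x z : nat) (s : seq vtx) : seq vtx :=
  [seq (if w == mkv x 1 z then mkv x n2 z else w) | w <- s].

(* W is an output of the Middle Cone Construction (any admissible choice
   in the case n2 odd, k <= 1). *)
Definition middle_cone_output (n1 n2 n3 : nat) (W : seq vtx) : Prop :=
  if odd n2 && (kcount n1 n2 n3 <= 1) then
    exists x z, [/\ mkv x 1 z \in WL n1 n2 n3, x \notin [:: 1; 2; n1] &
                    W = modify n2 x z (WL n1 n2 n3) ++ WR n1 n2 n3]
  else W = WL n1 n2 n3 ++ WR n1 n2 n3.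

(* Main.v *)
Require Import Defs.
From mathcomp Require Import all_boot zify.
Set Implicit Arguments. Unset Strict Implicit. Unset Printing Implicit Defensive.

Lemma count_undup_le1 (T : eqType) (P : pred T) (s : seq T) :
  (forall x y, x \in s -> y \in s -> P x -> P y -> x = y) ->
  count P (undup s) <= 1.
Proof.
move=> H; rewrite -size_filter.
case E: (filter P (undup s)) => [|x t]; first by [].
rewrite -E.
have : x \in filter P (undup s) by rewrite E mem_head.
rewrite mem_filter mem_undup => /andP[Px xs].
have sub : {subset filter P (undup s) <= [:: x]}.
  move=> y; rewrite mem_filter mem_undup => /andP[Py ys].
  by rewrite inE (H _ _ ys xs Py Px).
by have := uniq_leq_size (filter_uniq P (undup_uniq s)) sub.
Qed.

Lemma count_undup_ge2 (T : eqType) (P : pred T) (s : seq T) x y :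
  x != y -> x \in s -> y \in s -> P x -> P y -> 2 <= count P (undup s).
Proof.
move=> nxy xs ys Px Py; rewrite -size_filter.
have u : uniq [:: x; y] by rewrite /= inE nxy.
have sub : {subset [:: x; y] <= filter P (undup s)}.
  by move=> z; rewrite !inE => /orP[]/eqP->; rewrite mem_filter mem_undup ?Px ?Py.
exact: (uniq_leq_size u sub).
Qed.

Lemma nxt_range n1 i : 1 <= i <= n1 -> 1 <= nxt n1 i <= n1.
Proof. move=> *; rewrite /nxt; case: ifP => /eqP *; lia. Qed.
Lemma nxt_neq n1 i : 2 <= n1 -> 1 <= i <= n1 -> nxt n1 i != i.
Proof. move=> *; rewrite /nxt; case: ifP => /eqP *; lia. Qed.
Lemma nxt_inj n1 i j : 1 <= i <= n1 -> 1 <= j <= n1 -> nxt n1 i = nxt n1 j -> i = j.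
Proof. rewrite /nxt => h1 h2; case: (i =P n1) => ?; case: (j =P n1) => ?; lia. Qed.
Lemma nxt_surj n1 a : 2 <= n1 -> 1 <= a <= n1 -> exists2 j, 1 <= j <= n1 & nxt n1 j = a.
Proof.
move=> h1 h2; case: (a =P 1) => [->|na].
  exists n1; first lia. by rewrite /nxt eqxx.
exists a.-1; first lia. rewrite /nxt; case: ifP => /eqP *; lia.
Qed.

Lemma generic n1 n2 n3 (W : seq vtx) (B : nat -> nat -> bool) (gL gR : nat -> nat) :
  2 <= n1 ->
  (forall i c, B i c -> (1 <= i <= n1) && (1 <= c <= n3)) ->
  (forall i j c, B i c -> B j c -> i = j) ->
  (forall c, 1 <= c <= n3 -> exists i, B i c) ->
  (forall i, 1 <= i <= n1 -> exists c, B i c) ->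
  (forall w, w \in W <-> exists i c, B i c /\ (w = mkv i (gL c) c \/ w = mkv (nxt n1 i) (gR c) c)) ->
  (forall c, 1 <= c <= n3 -> (1 <= gL c <= n2) && (1 <= gR c <= n2)) ->
  (forall c, 1 <= c <= n3 -> gL c != gR c) ->
  (forall a, 1 <= a <= n2 -> exists c c', [/\ 1 <= c <= n3, 1 <= c' <= n3, c != c',
       (gL c == a) || (gR c == a) & (gL c' == a) || (gR c' == a)]) ->
  (forall i c c', B i c -> B i c' -> gL c = gL c' -> c = c') ->
  (forall i c c', B i c -> B i c' -> gR c = gR c' -> c = c') ->
  (forall i j c c', B i c -> B j c' -> nxt n1 j = i -> gL c = gR c' -> False) ->
  basic_landmark_system n1 n2 n3 W.
Proof.
move=> n12 Br Bu Bcov Bn Wm G1 G2 G3 G4a G4b G4c.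
have memL i c : B i c -> mkv i (gL c) c \in W by move=> h; apply/Wm; exists i, c; auto.
have memR i c : B i c -> mkv (nxt n1 i) (gR c) c \in W by move=> h; apply/Wm; exists i, c; auto.
have H2 : forall i a, 1 <= i <= 3 -> 1 <= a <= dimn n1 n2 n3 i ->
     2 <= count (fun w => coord i w == a) (undup W).
  move=> i a; case: i => [|[|[|[|i]]]] //= _ ha.
  - have [j hj ej] := nxt_surj n12 ha.
    have [c Bc] := Bn a ha. have [c' Bc'] := Bn j hj.
    apply: (count_undup_ge2 (x := mkv a (gL c) c) (y := mkv (nxt n1 j) (gR c') c')).
    + apply/negP => /eqP[_ _ e]. subst c'. have := Bu _ _ _ Bc Bc'. move=> e2; subst j.
      by move: (nxt_neq n12 hj); rewrite ej eqxx.
    + exact: memL. + exact: memR. + by []. + by rewrite /= ej.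
  - have [c [c' [hc hc' ncc' e1 e2]]] := G3 a ha.
    have [i Bi] := Bcov c hc. have [i' Bi'] := Bcov c' hc'.
    pose x := if gL c == a then mkv i (gL c) c else mkv (nxt n1 i) (gR c) c.
    pose y := if gL c' == a then mkv i' (gL c') c' else mkv (nxt n1 i') (gR c') c'.
    apply: (count_undup_ge2 (x := x) (y := y)).
    + rewrite /x /y; apply/negP; do 2 case: ifP => _; move/eqP=> [_ _ e]; by rewrite e eqxx in ncc'.
    + rewrite /x; case: ifP => _; [exact: memL|exact: memR].
    + rewrite /y; case: ifP => _; [exact: memL|exact: memR].
    + by rewrite /x; case: ifP => // h; move: e1; rewrite h.
    + by rewrite /y; case: ifP => // h; move: e2; rewrite h.
  - have [i Bi] := Bcov a ha. have /andP[hi _] := Br _ _ Bi.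
    apply: (count_undup_ge2 (x := mkv i (gL a) a) (y := mkv (nxt n1 i) (gR a) a)).
    + apply/negP => /eqP[e _]. by move: (nxt_neq n12 hi); rewrite -e eqxx.
    + exact: memL. + exact: memR. + by []. + by [].
have elim_mem : forall w, w \in W -> exists i c, B i c /\ (w = mkv i (gL c) c \/ w = mkv (nxt n1 i) (gR c) c).
  by move=> w /Wm.
have P13 : forall a b, count (fun w => (coord 1 w == a) && (coord 3 w == b)) (undup W) <= 1.
{
  move=> a b; apply: count_undup_le1 => x y /elim_mem [i [c [Bi ex]]] /elim_mem [j [d [Bj ey]]].
  case: ex => ->; case: ey => -> /= /andP[/eqP e1 /eqP e2] /andP[/eqP e3 /eqP e4];
  have cd : c = d by rewrite e2 e4.
  all: rewrite cd in Bi *; have e := Bu _ _ _ Bi Bj; rewrite -e in e3 *; try by [].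
  all: have /andP[hi _] := Br _ _ Bi; have := nxt_neq n12 hi; move/eqP; congruence. }
have P23 : forall a b, count (fun w => (coord 2 w == a) && (coord 3 w == b)) (undup W) <= 1.
{
  move=> a b; apply: count_undup_le1 => x y /elim_mem [i [c [Bi ex]]] /elim_mem [j [d [Bj ey]]].
  case: ex => ->; case: ey => -> /= /andP[/eqP e1 /eqP e2] /andP[/eqP e3 /eqP e4];
  have cd : c = d by rewrite e2 e4.
  all: rewrite cd in Bi *; have e := Bu _ _ _ Bi Bj; rewrite -e in e3 *; try by [].
  all: have /andP[_ hc] := Br _ _ Bi; have := G2 _ hc; move/eqP; congruence. }
have P12 : forall a b, count (fun w => (coord 1 w == a) && (coord 2 w == b)) (undup W) <= 1.
{
  move=> a b; apply: count_undup_le1 => x y /elim_mem [i [c [Bi ex]]] /elim_mem [j [d [Bj ey]]].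
  case: ex => ->; case: ey => -> /= /andP[/eqP e1 /eqP e2] /andP[/eqP e3 /eqP e4].
  + have ij : i = j by rewrite e1 e3. rewrite -ij in Bj *. by rewrite (G4a _ _ _ Bi Bj (etrans e2 (esym e4))).
  + by case: (G4c _ _ _ _ Bi Bj (etrans e3 (esym e1)) (etrans e2 (esym e4))).
  + by case: (G4c _ _ _ _ Bj Bi (etrans e1 (esym e3)) (etrans e4 (esym e2))).
  + have /andP[hi _] := Br _ _ Bi. have /andP[hj _] := Br _ _ Bj.
    have ij := nxt_inj hi hj (etrans e1 (esym e3)). rewrite -ij in Bj *.
    by rewrite (G4b _ _ _ Bi Bj (etrans e2 (esym e4))). }
split; last split; last split.
- move=> w /elim_mem [i [c [Bi ex]]] k hk.
  have /andP[hi hc] := Br _ _ Bi. have := G1 c hc => /andP[g1 g2].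
  case: k hk => [|[|[|[|k]]]] //= _; case: ex => -> //=; exact: nxt_range.
- move=> i a hi ha. have := H2 i a hi ha => h. have : has (fun w => coord i w == a) (undup W) by rewrite has_count; lia. move=> /hasP[w].
  rewrite mem_undup => wW /eqP e. by exists w.
- exact: H2.
- move=> i j a b; case: i => [|[|[|[|i]]]] //= _; case: j => [|[|[|[|j]]]] //= _ _ _ _;
  rewrite ?P12 ?P13 ?P23 //.
  + by rewrite (eq_count (a2 := fun w => (coord 1 w == b) && (coord 2 w == a))) ?P12 // => w; rewrite andbC.
  + by rewrite (eq_count (a2 := fun w => (coord 1 w == b) && (coord 3 w == a))) ?P13 // => w; rewrite andbC.
  + by rewrite (eq_count (a2 := fun w => (coord 2 w == b) && (coord 3 w == a))) ?P23 // => w; rewrite andbC.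
Qed.

Lemma nth_pat (a b : nat) r t j :
  nth 0 (flatten (nseq r [:: a; b]) ++ t) j =
  if j < 2 * r then (if odd j then b else a) else nth 0 t (j - 2 * r).
Proof.
elim: r j => [|r IH] j; first by rewrite /= subn0.
rewrite /= -/(flatten _).
case: j => [|[|j]] /=; first by [].
  by have -> : 1 < 2 * r.+1 by lia.
rewrite IH negbK.
have -> : (j.+2 < 2 * r.+1) = (j < 2 * r) by lia.
by have -> : j.+2 - 2 * r.+1 = j - 2 * r by lia.
Qed.

Lemma size_pat (a b : nat) r : size (flatten (nseq r [:: a; b])) = 2 * r.
Proof. elim: r => //= r IH; rewrite -/(flatten _) IH; lia. Qed.

Lemma sumn_pat (a b : nat) r : sumn (flatten (nseq r [:: a; b])) = r * (a + b).
Proof. elim: r => //= r IH; rewrite -/(flatten _) IH; lia. Qed.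

Lemma sumn_nseq m x : sumn (nseq m x) = m * x.
Proof. elim: m => //= m IH; rewrite IH; lia. Qed.

Lemma size_ells n1 n3 : 0 < n1 -> size (ells n1 n3) = n1.
Proof.
move=> h; rewrite /ells; have := ltn_pmod n3 h => lt.
case: ifP => hr; rewrite size_cat size_pat size_nseq; lia.
Qed.

Lemma sumn_ells n1 n3 : 0 < n1 -> sumn (ells n1 n3) = n3.
Proof.
move=> h; rewrite /ells; have := ltn_pmod n3 h; have := divn_eq n3 n1.
set q := n3 %/ n1; set r := n3 %% n1 => e lt.
case: ifP => hr; rewrite sumn_cat sumn_pat sumn_nseq; nia.
Qed.

Lemma ell_form n1 n3 i : 0 < n1 -> 1 <= i <= n1 ->
  ell n1 n3 i =
  if n3 %% n1 <= n1 - n3 %% n1 then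
    (if (i.-1 < 2 * (n3 %% n1)) && ~~ odd i.-1 then (n3 %/ n1).+1 else n3 %/ n1)
  else (if (i.-1 < 2 * (n1 - n3 %% n1)) && odd i.-1 then n3 %/ n1 else (n3 %/ n1).+1).
Proof.
move=> h hi; rewrite /ell /ells; have := ltn_pmod n3 h.
set q := n3 %/ n1; set r := n3 %% n1 => lt.
case: ifP => hr; rewrite nth_pat nth_nseq.
- case: ifP => hj /=; first by case: odd.
  have -> : i.-1 - 2 * r < n1 - 2 * r by lia. done.
- case: ifP => hj /=; first by case: odd.
  have -> : i.-1 - 2 * (n1 - r) < 2 * r - n1 by lia. done.
Qed.

Lemma ell_bounds n1 n3 i : 0 < n1 -> 1 <= i <= n1 ->
  n3 %/ n1 <= ell n1 n3 i <= (n3 %/ n1).+1.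
Proof. move=> h hi; rewrite ell_form //; case: ifP => _; case: ifP => _; lia. Qed.

Lemma ell_long_r n1 n3 i : 0 < n1 -> 1 <= i <= n1 ->
  ell n1 n3 i = (n3 %/ n1).+1 -> 0 < n3 %% n1.
Proof.
move=> h hi; rewrite ell_form //; have := ltn_pmod n3 h.
case: ifP => hr; case: ifP => hj /=; try lia.
Qed.

Lemma ell_le1 n1 n3 i : 0 < n1 -> 1 <= i <= n1 -> ell n1 n3 i <= ell n1 n3 1.
Proof.
move=> h hi; rewrite (ell_form n3 h hi) (ell_form n3 h (i:=1)) /=; last lia.
have := ltn_pmod n3 h.
case: ifP => hr; case: ifP => hj; case: ifP => hk; move: hj hk; rewrite ?andbT //=; try lia.
Qed.

Lemma sfirst1 n1 n3 : sfirst n1 n3 1 = 1.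
Proof. by rewrite /sfirst /Lsum take0. Qed.

Lemma sfirstS n1 n3 i : 0 < n1 -> 1 <= i <= n1 ->
  sfirst n1 n3 i.+1 = sfirst n1 n3 i + ell n1 n3 i.
Proof.
move=> h hi; rewrite /sfirst /Lsum /ell /=.
have e : i = i.-1.+1 by lia.
rewrite {1}e (take_nth 0); last by rewrite size_ells //; lia.
rewrite sumn_rcons; lia.
Qed.

Lemma sfirst_end n1 n3 : 0 < n1 -> sfirst n1 n3 n1.+1 = n3.+1.
Proof.
move=> h; rewrite /sfirst /Lsum /= take_oversize ?sumn_ells // size_ells //.
Qed.

Lemma sfirst_mono n1 n3 i k : 0 < n1 -> 1 <= i -> i + k <= n1.+1 ->
  sfirst n1 n3 i <= sfirst n1 n3 (i + k).
Proof.
move=> h hi; elim: k => [|k IH] hk; first by rewrite addn0.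
rewrite addnS sfirstS //; last lia.
have := IH ltac:(lia); lia.
Qed.

Definition blk n1 n3 i c :=
  (1 <= i <= n1) && (sfirst n1 n3 i <= c < sfirst n1 n3 i + ell n1 n3 i).

Lemma blk_lt n1 n3 i j : 0 < n1 -> 1 <= i -> i < j -> j <= n1.+1 ->
  sfirst n1 n3 i + ell n1 n3 i <= sfirst n1 n3 j.
Proof.
move=> h hi hij hj; rewrite -sfirstS //; last lia.
have e : j = i.+1 + (j - i.+1) by lia.
rewrite e; apply: sfirst_mono => //; lia.
Qed.

Lemma blk_range n1 n3 i c : 0 < n1 -> blk n1 n3 i c -> (1 <= i <= n1) && (1 <= c <= n3).
Proof.
move=> h /andP[hi hc]; rewrite hi /=.
have h1 : sfirst n1 n3 1 <= sfirst n1 n3 i.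
  have e : i = 1 + (i - 1) by lia.
  rewrite e; apply: sfirst_mono => //; lia.
rewrite sfirst1 in h1.
case: (ltngtP i n1) => hin.
- have := blk_lt n3 h (_ : 1 <= i) (_ : i < n1.+1) (leqnn _).
  rewrite sfirst_end //; lia.
- lia.
- subst i. rewrite -sfirstS ?sfirst_end // in hc; lia.
Qed.

Lemma blk_uniq n1 n3 i j c : 0 < n1 -> blk n1 n3 i c -> blk n1 n3 j c -> i = j.
Proof.
move=> h Bi Bj.
have /andP[hi _] := blk_range h Bi. have /andP[hj _] := blk_range h Bj.
move: Bi Bj => /andP[_ Bi] /andP[_ Bj].
case: (ltngtP i j) => hij //.
- have := blk_lt n3 h (_ : 1 <= i) hij (_ : j <= n1.+1); lia.
- have := blk_lt n3 h (_ : 1 <= j) hij (_ : i <= n1.+1); lia.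
Qed.

Lemma blk_cover n1 n3 c : 0 < n1 -> 1 <= c <= n3 -> exists i, blk n1 n3 i c.
Proof.
move=> h hc.
suff : forall m, m <= n1 -> c < sfirst n1 n3 m.+1 -> exists i, blk n1 n3 i c.
  by move=> H; apply: (H n1 (leqnn _)); rewrite sfirst_end //; lia.
elim => [|m IH] hm; first by rewrite sfirst1; lia.
rewrite (sfirstS n3 h (i := m.+1) ltac:(lia)).
case: (leqP (sfirst n1 n3 m.+1) c) => hc2 hc3.
- exists m.+1; rewrite /blk hc2 hc3; lia.
- apply: IH => //; lia.
Qed.

Lemma blk_first n1 n3 i : 0 < n1 -> n1 <= n3 -> 1 <= i <= n1 -> blk n1 n3 i (sfirst n1 n3 i).
Proof.
move=> h h13 hi; rewrite /blk hi leqnn /=.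
have := ell_bounds n3 h hi. have : 0 < n3 %/ n1 by rewrite divn_gt0.
lia.
Qed.

Lemma fodd_eq n2 : odd n2 -> n2 = 2 * fodd n2 + 1.
Proof.
move=> o; rewrite /fodd; have e := odd_double_half n2; rewrite o -muln2 in e; lia.
Qed.

Lemma cnt_split (p : pred nat) c c' : c <= c' ->
  count p (iota 1 c') = count p (iota 1 c) + count p (iota c.+1 (c' - c)).
Proof. by move=> h; rewrite -{1}(subnKC h) iotaD count_cat add1n. Qed.

Lemma cnt_last (p : pred nat) n : count p (iota 1 n.+1) = count p (iota 1 n) + p n.+1.
Proof. by rewrite (cnt_split p (leqnSn n)) subSnn /= addn0. Qed.

Lemma cnt_reach (p : pred nat) n m : 1 <= m <= count p (iota 1 n) ->
  exists c, [/\ 1 <= c <= n, p c & count p (iota 1 c) = m].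
Proof.
elim: n => [|n IH] hm; first by move: hm => /=; lia.
rewrite cnt_last in hm.
case: (leqP m (count p (iota 1 n))) => h.
- have [c [h1 h2 h3]] := IH ltac:(lia). exists c; split => //; lia.
- exists n.+1. case pn: (p n.+1) hm => hm; last by move: hm => /=; lia.
  split; [lia|done|]. rewrite cnt_last pn. move: hm => /=; lia.
Qed.

Lemma count_lt_size (T : eqType) (q : pred T) s x :
  x \in s -> q x -> count (fun y => ~~ q y) s < size s.
Proof.
move=> xs qx; rewrite -(count_predC q s).
have : 0 < count q s by rewrite -has_count; apply/hasP; exists x.
have -> : count (fun y => ~~ q y) s = count (predC q) s by [].
lia.
Qed.

Lemma count_pos (T : eqType) (q : pred T) s x : x \in s -> q x -> 0 < count q s.
Proof. by move=> xs qx; rewrite -has_count; apply/hasP; exists x. Qed.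

Lemma mod_close d x y : 0 < d -> x %% d = y %% d -> x <= y -> y < x + d -> x = y.
Proof.
move=> d0 e le lt. have : d %| y - x by rewrite -eqn_mod_dvd // e.
case: (posnP (y - x)) => [h|h]; first lia.
move/(dvdn_leq h); lia.
Qed.

Lemma gval f a k : 0 < f -> 1 <= a <= f -> ((a + k * f - 1) %% f).+1 = a.
Proof.
move=> f0 ha. have -> : a + k * f - 1 = k * f + (a - 1) by lia.
rewrite modnMDl modn_small; lia.
Qed.

Lemma count_ge2 (T : eqType) (p : pred T) s x y :
  uniq s -> x != y -> x \in s -> y \in s -> p x -> p y -> 2 <= count p s.
Proof.
move=> us nxy xs ys px py.
have u : uniq [:: x; y] by rewrite /= inE nxy.
have sub : {subset [:: x; y] <= filter p s}.
  by move=> z; rewrite !inE => /orP[]/eqP->; rewrite mem_filter ?px ?py.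
rewrite -size_filter; exact: (uniq_leq_size u sub).
Qed.

Definition P1of (P : pred nat) c := (1 < c) && P c.-1.
Definition gLo n2 (P : pred nat) c :=
  if P c then n2 else ((count (fun c' => ~~ P c') (iota 1 c) - 1) %% fodd n2).+1.
Definition gRo n2 (P : pred nat) c :=
  if P1of P c then n2
  else fodd n2 + ((count (fun c' => ~~ P1of P c') (iota 1 c) - 1) %% fodd n2).+1.
Definition gLm n2 P (z0 : nat) c := if c == z0 then n2 else gLo n2 P c.

Lemma odd_main n1 n2 n3 (P : pred nat) z0 :
  3 <= n1 -> n1 <= n3 -> odd n2 -> 3 <= n2 ->
  (forall i, 1 <= i <= n1 -> ell n1 n3 i <= (fodd n2).+1) ->
  (forall c, P c -> exists2 j, 1 <= j <= n1 & (c == sfirst n1 n3 j) && (2 <= ell n1 n3 j)) ->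
  (forall i, 1 <= i <= n1 -> ell n1 n3 i = (fodd n2).+1 -> P (sfirst n1 n3 i)) ->
  (forall i j, 1 <= i <= n1 -> 1 <= j <= n1 -> P (sfirst n1 n3 i) -> P (sfirst n1 n3 j) ->
     nxt n1 j != i) ->
  (exists c0, P c0) ->
  3 * fodd n2 <= count (fun c => ~~ P c) (iota 1 n3) ->
  2 * fodd n2 <= count (fun c => ~~ P1of P c) (iota 1 n3) ->
  (z0 = 0 \/ exists x0, [/\ blk n1 n3 x0 z0, gLo n2 P z0 = 1,
        (forall c, blk n1 n3 x0 c -> ~~ P c),
        (forall j c, blk n1 n3 j c -> P1of P c -> nxt n1 j != x0) & ~~ P1of P z0]) ->
  [/\ (forall c, 1 <= c <= n3 -> (1 <= gLm n2 P z0 c <= n2) && (1 <= gRo n2 P c <= n2)),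
      (forall c, 1 <= c <= n3 -> gLm n2 P z0 c != gRo n2 P c),
      (forall a, 1 <= a <= n2 -> exists c c', [/\ 1 <= c <= n3, 1 <= c' <= n3, c != c',
          (gLm n2 P z0 c == a) || (gRo n2 P c == a) & (gLm n2 P z0 c' == a) || (gRo n2 P c' == a)]),
      (forall i c c', blk n1 n3 i c -> blk n1 n3 i c' -> gLm n2 P z0 c = gLm n2 P z0 c' -> c = c') &
      (forall i c c', blk n1 n3 i c -> blk n1 n3 i c' -> gRo n2 P c = gRo n2 P c' -> c = c') /\
      (forall i j c c', blk n1 n3 i c -> blk n1 n3 j c' -> nxt n1 j = i ->
          gLm n2 P z0 c = gRo n2 P c' -> False)].
Proof.
move=> h1 h13 on2 h2 Hell Hst Hlong Hnc [c0 Pc0] HN HN1 Hz.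
have n1p : 0 < n1 by lia.
have n2e := fodd_eq on2.
set f := fodd n2 in Hell Hlong HN HN1 n2e *.
have f1 : 1 <= f by lia.
have PL c : P c -> gLo n2 P c = n2 by rewrite /gLo => ->.
have NL c : ~~ P c -> 1 <= gLo n2 P c <= f.
  by move=> h; rewrite /gLo (negbTE h); have := ltn_pmod (count (fun c' => ~~ P c') (iota 1 c) - 1) f1; lia.
have PR c : P1of P c -> gRo n2 P c = n2 by rewrite /gRo => ->.
have NR c : ~~ P1of P c -> f.+1 <= gRo n2 P c <= 2 * f.
  by move=> h; rewrite /gRo (negbTE h); have := ltn_pmod (count (fun c' => ~~ P1of P c') (iota 1 c) - 1) f1; lia.
have Pblk c : P c -> exists j, [/\ blk n1 n3 j c, blk n1 n3 j c.+1 & c = sfirst n1 n3 j].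
  move=> /Hst [j hj /andP[/eqP e he]]. exists j; split => //.
  - rewrite e; exact: blk_first.
  - by rewrite /blk hj e /=; lia.
have P1blk c : P1of P c -> exists j, [/\ blk n1 n3 j c, c = (sfirst n1 n3 j).+1 & P (sfirst n1 n3 j)].
  move=> /andP[c1 Pc]. have [j [_ B2 e]] := Pblk _ Pc. exists j.
  have e2 : c.-1.+1 = c by lia. rewrite e2 in B2. split => //; first lia. by rewrite -e.
have Hz' c : 1 <= c -> c = z0 -> exists x0, [/\ blk n1 n3 x0 z0, gLo n2 P z0 = 1,
        (forall c, blk n1 n3 x0 c -> ~~ P c),
        (forall j c, blk n1 n3 j c -> P1of P c -> nxt n1 j != x0) & ~~ P1of P z0].
  move=> hc ez; case: Hz => [ez0|//]; lia.
have G1 : forall c, 1 <= c <= n3 -> (1 <= gLm n2 P z0 c <= n2) && (1 <= gRo n2 P c <= n2).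
  move=> c hc; apply/andP; split.
  - rewrite /gLm; case: eqP => _; first lia.
    case Pc: (P c); first by rewrite PL //; lia.
    have := NL c (negbT Pc); lia.
  - case P1c: (P1of P c); first by rewrite PR //; lia.
    have := NR c (negbT P1c); lia.
split => //; last split.
- move=> c hc; rewrite /gLm; case: (c =P z0) => [ez|nez].
  + have [x0 [_ _ _ _ nP1]] := Hz' c ltac:(lia) ez.
    rewrite ez; have := NR _ nP1; move=> h; apply/eqP; lia.
  + case Pc: (P c); case P1c: (P1of P c).
    * have [j [Bj _ ej]] := Pblk _ Pc. have [j' [Bj' ej' _]] := P1blk _ P1c.
      have e := blk_uniq n1p Bj Bj'. subst j'. lia.
    * rewrite PL //; have := NR c (negbT P1c); move=> h; apply/eqP; lia.
    * rewrite PR //; have := NL c (negbT Pc); move=> h; apply/eqP; lia.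
    * have := NR c (negbT P1c); have := NL c (negbT Pc); move=> ha hb; apply/eqP; lia.
- move=> a ha.
  case: (ltngtP a n2) => hn2; last first.
  + have [j [B1 B2 _]] := Pblk _ Pc0.
    have /andP[_ r1] := blk_range n1p B1. have /andP[_ r2] := blk_range n1p B2.
    exists c0, c0.+1; split => //; first by rewrite neq_ltn ltnSn.
    * apply/orP; left; rewrite /gLm hn2; case: (c0 =P z0) => _; [by [] | by rewrite PL].
    * apply/orP; right; rewrite PR ?hn2 // /P1of /=; apply/andP; split => //; lia.
  + lia.
  case: (leqP a f) => haf.
  + have [c1 [r1 p1 e1]] := cnt_reach (p := fun c => ~~ P c) (n := n3) (m := a) ltac:(lia).
    have [c2 [r2 p2 e2]] := cnt_reach (p := fun c => ~~ P c) (n := n3) (m := a + 1 * f) ltac:(lia).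
    have [c3 [r3 p3 e3]] := cnt_reach (p := fun c => ~~ P c) (n := n3) (m := a + 2 * f) ltac:(lia).
    have v1 : gLo n2 P c1 = a by rewrite /gLo (negbTE p1) e1 modn_small; lia.
    have v2 : gLo n2 P c2 = a by rewrite /gLo (negbTE p2) e2 gval //; lia.
    have v3 : gLo n2 P c3 = a by rewrite /gLo (negbTE p3) e3 gval //; lia.
    have d12 : c1 != c2 by apply/eqP => e; move: e1 e2; rewrite e; lia.
    have d13 : c1 != c3 by apply/eqP => e; move: e1 e3; rewrite e; lia.
    have d23 : c2 != c3 by apply/eqP => e; move: e2 e3; rewrite e; lia.
    have gm c : c != z0 -> gLo n2 P c = a -> gLm n2 P z0 c == a.
      by move=> h h'; rewrite /gLm (negbTE h) h'.
    case: (c1 =P z0) => [ez1|nz1].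
    * exists c2, c3; split => //.
      -- apply/orP; left; apply: gm => //; apply/eqP => ez; move: d12; by rewrite ez1 ez eqxx.
      -- apply/orP; left; apply: gm => //; apply/eqP => ez; move: d13; by rewrite ez1 ez eqxx.
    case: (c2 =P z0) => [ez2|nz2].
    * exists c1, c3; split => //.
      -- apply/orP; left; apply: gm => //; exact/eqP.
      -- apply/orP; left; apply: gm => //; apply/eqP => ez; move: d23; by rewrite ez2 ez eqxx.
    * exists c1, c2; split => //; apply/orP; left; apply: gm => //; exact/eqP.
  + have [c1 [r1 p1 e1]] := cnt_reach (p := fun c => ~~ P1of P c) (n := n3) (m := a - f) ltac:(lia).
    have [c2 [r2 p2 e2]] := cnt_reach (p := fun c => ~~ P1of P c) (n := n3) (m := (a - f) + 1 * f) ltac:(lia).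
    have v1 : gRo n2 P c1 = a.
      rewrite /gRo (negbTE p1) e1 modn_small; lia.
    have v2 : gRo n2 P c2 = a.
      rewrite /gRo (negbTE p2) e2 gval //; lia.
    exists c1, c2; split => //; rewrite ?v1 ?v2 ?eqxx ?orbT //.
    apply/eqP => e; move: e1 e2; rewrite e; lia.
- have core : forall i c c', blk n1 n3 i c -> blk n1 n3 i c' -> gLo n2 P c = gLo n2 P c' -> c = c'.
  { move=> i c c' Bc Bc' e.
    case Pc: (P c); case Pc': (P c').
    - have [j [Bj _ ej]] := Pblk _ Pc. have [j' [Bj' _ ej']] := Pblk _ Pc'.
      by rewrite ej ej' -(blk_uniq n1p Bc Bj) -(blk_uniq n1p Bc' Bj').
    - move: e; rewrite PL //; have := NL c' (negbT Pc'); lia.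
    - move: e; rewrite (PL c') //; have := NL c (negbT Pc); lia.
    have claim : forall c c', blk n1 n3 i c -> blk n1 n3 i c' -> ~~ P c -> ~~ P c' -> c < c' ->
        gLo n2 P c <> gLo n2 P c'.
    { clear Pc Pc' e Bc Bc' c c'; move=> c c' Bc Bc' Pc Pc' lt.
      rewrite /gLo (negbTE Pc) (negbTE Pc') (cnt_split _ (ltnW lt)).
      set A := count _ (iota 1 c). set D := count _ (iota c.+1 _).
      have /andP[_ /andP[rcc _]] := blk_range n1p Bc.
      have A1 : 1 <= A by apply: (count_pos (x := c)) => //; rewrite mem_iota; lia.
      have D1 : 1 <= D by apply: (count_pos (x := c')) => //; rewrite mem_iota; lia.
      have Dle : D <= c' - c by rewrite /D; have := count_size (fun c' => ~~ P c') (iota c.+1 (c' - c)); rewrite size_iota.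
      have hi := Hell i (proj1 (andP (blk_range n1p Bc))).
      have Df : D <= f - 1.
        case: (leqP (c' - c) (f - 1)) => hcc; first lia.
        exfalso. move: Bc Bc' => /andP[hi' Bc] /andP[_ Bc'].
        have ec : c = sfirst n1 n3 i by lia.
        have el : ell n1 n3 i = f.+1 by lia.
        by move: Pc; rewrite ec Hlong.
      move=> e; have := mod_close f1 (succn_inj e) (_ : A - 1 <= A + D - 1) (_ : A + D - 1 < A - 1 + f); lia. }
    case: (ltngtP c c') => hcc //.
    - by case: (claim c c' Bc Bc' (negbT Pc) (negbT Pc') hcc).
    - by case: (claim c' c Bc' Bc (negbT Pc') (negbT Pc) hcc).  }
  move=> i c c' Bc Bc'; rewrite /gLm.
  case: (c =P z0) => [ez|nez]; case: (c' =P z0) => [ez'|nez'].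
  + by rewrite ez ez'.
  + move=> e. have /andP[_ /andP[r1 _]] := blk_range n1p Bc.
    have [x0 [Bx0 _ nP _ _]] := Hz' c r1 ez. rewrite -ez in Bx0.
    have ex := blk_uniq n1p Bc Bx0; subst x0.
    case Pc': (P c'); first by move: (nP c' Bc'); rewrite Pc'.
    move: e; have := NL c' (negbT Pc'); lia.
  + move=> e. have /andP[_ /andP[r1 _]] := blk_range n1p Bc'.
    have [x0 [Bx0 _ nP _ _]] := Hz' c' r1 ez'. rewrite -ez' in Bx0.
    have ex := blk_uniq n1p Bc' Bx0; subst x0.
    case Pc: (P c); first by move: (nP c Bc); rewrite Pc.
    move: e; have := NL c (negbT Pc); lia.
  + exact: (core i c c' Bc Bc').
- move=> i c c' Bc Bc' e.
  case Pc: (P1of P c); case Pc': (P1of P c').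
  + have [j [Bj ej _]] := P1blk _ Pc. have [j' [Bj' ej' _]] := P1blk _ Pc'.
    by rewrite ej ej' -(blk_uniq n1p Bc Bj) -(blk_uniq n1p Bc' Bj').
  + move: e; rewrite PR //; have := NR c' (negbT Pc'); lia.
  + move: e; rewrite (PR c') //; have := NR c (negbT Pc); lia.
  have claim : forall c c', blk n1 n3 i c -> blk n1 n3 i c' -> ~~ P1of P c -> ~~ P1of P c' -> c < c' ->
      gRo n2 P c <> gRo n2 P c'.
  { clear Pc Pc' e Bc Bc' c c'; move=> c c' Bc Bc' Pc Pc' lt.
    rewrite /gRo (negbTE Pc) (negbTE Pc') (cnt_split _ (ltnW lt)).
    set A := count _ (iota 1 c). set D := count _ (iota c.+1 _).
    have /andP[_ /andP[rcc _]] := blk_range n1p Bc.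
    have A1 : 1 <= A by apply: (count_pos (x := c)) => //; rewrite mem_iota; lia.
    have D1 : 1 <= D by apply: (count_pos (x := c')) => //; rewrite mem_iota; lia.
    have Dle : D <= c' - c by rewrite /D; have := count_size (fun c' => ~~ P1of P c') (iota c.+1 (c' - c)); rewrite size_iota.
    have hi := Hell i (proj1 (andP (blk_range n1p Bc))).
    have Df : D <= f - 1.
      case: (leqP (c' - c) (f - 1)) => hcc; first lia.
      move: Bc Bc' => /andP[hi' Bc] /andP[_ Bc'].
      have ec : c = sfirst n1 n3 i by lia.
      have el : ell n1 n3 i = f.+1 by lia.
      have PP : P1of P c.+1 by rewrite /P1of /= ec Hlong // andbT; lia.
      have := count_lt_size (q := P1of P) (s := iota c.+1 (c' - c)) (x := c.+1) ltac:(rewrite mem_iota; lia) PP.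
      rewrite size_iota -/D; lia.
    move=> e; have e' : (A - 1) %% f = (A + D - 1) %% f by move: e => /eqP; rewrite eqn_add2l eqSS => /eqP.
    have := mod_close f1 e' (_ : A - 1 <= A + D - 1) (_ : A + D - 1 < A - 1 + f); lia. }
  case: (ltngtP c c') => hcc //.
  + by case: (claim c c' Bc Bc' (negbT Pc) (negbT Pc') hcc).
  + by case: (claim c' c Bc' Bc (negbT Pc') (negbT Pc) hcc).
- move=> i j c c' Bc Bc' nji; rewrite /gLm.
  have /andP[ri _] := blk_range n1p Bc. have /andP[rj _] := blk_range n1p Bc'.
  case: (c =P z0) => [ez|nez] e.
  + have /andP[_ /andP[r1 _]] := blk_range n1p Bc.
    have [x0 [Bx0 _ _ nx _]] := Hz' c r1 ez. rewrite -ez in Bx0.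
    have ex := blk_uniq n1p Bc Bx0; subst x0.
    case P1c: (P1of P c'); last by move: e; have := NR c' (negbT P1c); lia.
    by move: (nx j c' Bc' P1c); rewrite nji eqxx.
  + case Pc: (P c); last first.
      move: e; have := NL c (negbT Pc). case P1c: (P1of P c').
      * rewrite PR //; lia.
      * have := NR c' (negbT P1c); lia.
    case P1c: (P1of P c'); last by move: e; have := NR c' (negbT P1c); rewrite PL //; lia.
    have [jj [Bjj _ ejj]] := Pblk _ Pc. have ejj' := blk_uniq n1p Bc Bjj. rewrite -ejj' in ejj.
    have [j' [Bj' ej' Pj']] := P1blk _ P1c. have ej2 := blk_uniq n1p Bc' Bj'. rewrite -ej2 in Pj'.
    rewrite ejj in Pc.
    by move: (Hnc i j ri rj Pc Pj'); rewrite nji eqxx.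
Qed.

Lemma memWL n1 n2 n3 w : w \in WL n1 n2 n3 <->
  exists i c, blk n1 n3 i c /\ w = mkv i (yL n1 n2 n3 c) c.
Proof.
rewrite /WL; split.
- move/flatten_mapP => [i hi /mapP[c hc ->]]. exists i, c; split => //.
  by move: hi hc; rewrite /blk !mem_iota; lia.
- move=> [i [c [/andP[hi hc] ->]]]; apply/flatten_mapP; exists i; first by rewrite mem_iota; lia.
  apply/mapP; exists c => //; rewrite mem_iota; lia.
Qed.

Lemma memWR n1 n2 n3 w : w \in WR n1 n2 n3 <->
  exists i c, blk n1 n3 i c /\ w = mkv (nxt n1 i) (yR n1 n2 n3 c) c.
Proof.
rewrite /WR; split.
- move/flatten_mapP => [i hi /mapP[c hc ->]]. exists i, c; split => //.
  by move: hi hc; rewrite /blk !mem_iota; lia.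
- move=> [i [c [/andP[hi hc] ->]]]; apply/flatten_mapP; exists i; first by rewrite mem_iota; lia.
  apply/mapP; exists c => //; rewrite mem_iota; lia.
Qed.

Lemma mem_modify n1 n2 n3 (s : seq vtx) (g : nat -> nat) x0 z0 :
  0 < n1 -> blk n1 n3 x0 z0 -> g z0 = 1 ->
  (forall w, w \in s <-> exists i c, blk n1 n3 i c /\ w = mkv i (g c) c) ->
  forall w, w \in modify n2 x0 z0 s <->
    exists i c, blk n1 n3 i c /\ w = mkv i (if c == z0 then n2 else g c) c.
Proof.
move=> n1p Bx g1 Hs w; rewrite /modify; split.
- move/mapP => [w' /Hs [i [c [Bc ->]]] ->]. exists i, c; split => //.
  case: eqP => [[-> _ ->]|ne]; first by rewrite eqxx.
  case: (c =P z0) => // ez. exfalso; apply: ne.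
  rewrite ez in Bc *; rewrite (blk_uniq n1p Bc Bx) g1 //.
- move=> [i [c [Bc ->]]]; apply/mapP; exists (mkv i (g c) c); first by apply/Hs; exists i, c.
  case: (c =P z0) => [ez|ne].
  + rewrite ez in Bc *; rewrite (blk_uniq n1p Bc Bx) g1 eqxx //.
  + case: eqP => // [[_ _ ez]]. by case: ne.
Qed.

Lemma blk_dist n1 n3 i c c' : blk n1 n3 i c -> blk n1 n3 i c' -> c' < c + ell n1 n3 i.
Proof. rewrite /blk; lia. Qed.

Lemma even_main n1 n2 n3 :
  0 < n1 -> ~~ odd n2 -> 3 <= n2 -> n2 <= n3 ->
  (forall i, 1 <= i <= n1 -> ell n1 n3 i <= n2 %/ 2) ->
  [/\ (forall c, 1 <= c <= n3 -> (1 <= yL_even n2 c <= n2) && (1 <= yR_even n2 c <= n2)),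
      (forall c, 1 <= c <= n3 -> yL_even n2 c != yR_even n2 c),
      (forall a, 1 <= a <= n2 -> exists c c', [/\ 1 <= c <= n3, 1 <= c' <= n3, c != c',
          (yL_even n2 c == a) || (yR_even n2 c == a) & (yL_even n2 c' == a) || (yR_even n2 c' == a)]),
      (forall i c c', blk n1 n3 i c -> blk n1 n3 i c' -> yL_even n2 c = yL_even n2 c' -> c = c') &
      (forall i c c', blk n1 n3 i c -> blk n1 n3 i c' -> yR_even n2 c = yR_even n2 c' -> c = c') /\
      (forall i j c c', blk n1 n3 i c -> blk n1 n3 j c' -> nxt n1 j = i ->
          yL_even n2 c = yR_even n2 c' -> False)].
Proof.
move=> n1p ev h2 h23 Hell.
have n2e : n2 = 2 * (n2 %/ 2).
  have := divn_eq n2 2; have : n2 %% 2 = 0 by rewrite modn2 (negbTE ev). lia.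
rewrite /yL_even /yR_even.
set h := n2 %/ 2 in n2e Hell *.
have hp : 0 < h by lia.
have md x : x %% h < h by apply: ltn_pmod.
have core : forall i c c', blk n1 n3 i c -> blk n1 n3 i c' -> (c - 1) %% h = (c' - 1) %% h -> c = c'.
  move=> i c c' Bc Bc' e.
  have /andP[_ /andP[r1 _]] := blk_range n1p Bc. have /andP[_ /andP[r2 _]] := blk_range n1p Bc'.
  have /andP[hi _] := blk_range n1p Bc. have := Hell i hi.
  have := blk_dist Bc Bc'; have := blk_dist Bc' Bc => d1 d2 he.
  case: (leqP c c') => hcc.
  - have := mod_close hp e (_ : c - 1 <= c' - 1) (_ : c' - 1 < c - 1 + h); lia.
  - have := mod_close hp (esym e) (_ : c' - 1 <= c - 1) (_ : c - 1 < c' - 1 + h); lia.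
split.
- move=> c hc; have := md (c - 1) => ?; apply/andP; split; lia.
- move=> c hc; have := md (c - 1); move=> ?; apply/eqP; lia.
- move=> a ha; case: (leqP a h) => hah.
  + exists a, (a + h); split; try lia.
    * by rewrite modn_small ?eqxx //; lia.
    * have -> : a + h - 1 = (a - 1) + h by lia. by rewrite modnDr modn_small ?eqxx //; lia.
  + exists (a - h), a; split; try lia.
    * rewrite modn_small; last lia. apply/orP; right; apply/eqP; lia.
    * have -> : a - 1 = (a - h - 1) + h by lia. rewrite modnDr modn_small; last lia.
      apply/orP; right; apply/eqP; lia.
- move=> i c c' Bc Bc' e; apply: (core i) => //; lia.
- split.
  + move=> i c c' Bc Bc' e; apply: (core i) => //; lia.
  + move=> i j c c' _ _ _; have := md (c - 1); have := md (c' - 1); lia.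
Qed.

Lemma odd_q_le_f n1 n2 n3 : 0 < n1 -> odd n2 -> 2 * n3 <= n1 * n2 -> n3 %/ n1 <= fodd n2.
Proof.
move=> n1p on2 hp. have n2e := fodd_eq on2. have := divn_eq n3 n1.
set q := n3 %/ n1; set r := n3 %% n1; set f := fodd n2 in n2e *. move=> e.
case: (leqP q f) => // hq. exfalso.
have : (f + 1) * n1 <= q * n1 by apply: leq_mul; lia.
nia.
Qed.

Lemma decomp n1 n3 (p : pred nat) : 0 < n1 ->
  count p (iota 1 n3) = sumn [seq count p (iota (sfirst n1 n3 i) (ell n1 n3 i)) | i <- iota 1 n1].
Proof.
move=> n1p.
suff H : forall m, m <= n1 -> iota 1 (sfirst n1 n3 m.+1).-1 =
    flatten [seq iota (sfirst n1 n3 i) (ell n1 n3 i) | i <- iota 1 m].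
  by have := H n1 (leqnn _); rewrite sfirst_end //= => ->; rewrite count_flatten -map_comp.
elim => [|m IH] hm; first by rewrite sfirst1.
rewrite (sfirstS n3 n1p (i := m.+1) ltac:(lia)).
have sp : 1 <= sfirst n1 n3 m.+1.
  have := sfirst_mono n3 n1p (i := 1) (k := m) (leqnn _) ltac:(lia). rewrite sfirst1 add1n. lia.
have -> : (sfirst n1 n3 m.+1 + ell n1 n3 m.+1).-1 = (sfirst n1 n3 m.+1).-1 + ell n1 n3 m.+1 by lia.
rewrite iotaD IH; last lia.
have -> : 1 + (sfirst n1 n3 m.+1).-1 = sfirst n1 n3 m.+1 by lia.
have -> : iota 1 m.+1 = iota 1 m ++ [:: m.+1] by have := iotaD 1 m 1; rewrite addn1 /= add1n.
by rewrite map_cat flatten_cat /= cats0.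
Qed.

Lemma sumn_ge (s : seq nat) (g : nat -> nat) f :
  (forall i, i \in s -> f <= g i) -> f * size s <= sumn [seq g i | i <- s].
Proof.
elim: s => [|x s IH] H /=; first by rewrite muln0.
have := H x (mem_head _ _). have := IH (fun i hi => H i (ltac:(by rewrite inE hi orbT))). lia.
Qed.

Lemma count_le1_uniq (T : eqType) (p : pred T) s x0 :
  uniq s -> (forall x, x \in s -> p x -> x = x0) -> count p s <= 1.
Proof.
move=> us H; rewrite -(undup_id us); apply: count_undup_le1 => x y xs ys px py.
by rewrite (H x xs px) (H y ys py).
Qed.

Lemma block_bound n1 n3 f (Q : pred nat) x0 i :
  0 < n1 -> 1 <= i <= n1 -> f <= ell n1 n3 i <= f.+1 ->
  (forall x, blk n1 n3 i x -> Q x -> f < ell n1 n3 i /\ x = x0) ->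
  f <= count (fun c => ~~ Q c) (iota (sfirst n1 n3 i) (ell n1 n3 i)).
Proof.
move=> n1p hi hb H.
have eC : count (fun c => ~~ Q c) (iota (sfirst n1 n3 i) (ell n1 n3 i)) =
          ell n1 n3 i - count Q (iota (sfirst n1 n3 i) (ell n1 n3 i)).
  have := count_predC Q (iota (sfirst n1 n3 i) (ell n1 n3 i)); rewrite size_iota.
  have -> : count (predC Q) (iota (sfirst n1 n3 i) (ell n1 n3 i)) =
            count (fun c => ~~ Q c) (iota (sfirst n1 n3 i) (ell n1 n3 i)) by [].
  lia.
rewrite eC.
have memb x : x \in iota (sfirst n1 n3 i) (ell n1 n3 i) -> blk n1 n3 i x.
  by rewrite mem_iota /blk hi.
case: (ltnP f (ell n1 n3 i)) => hl.
- have : count Q (iota (sfirst n1 n3 i) (ell n1 n3 i)) <= 1.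
    apply: (count_le1_uniq (x0 := x0) (iota_uniq _ _)) => x xs qx.
    by case: (H x (memb x xs) qx).
  lia.
- have : count Q (iota (sfirst n1 n3 i) (ell n1 n3 i)) = 0.
    apply/eqP; rewrite -leqn0 leqNgt -has_count; apply/hasP => [[x xs qx]].
    case: (H x (memb x xs) qx); lia.
  lia.
Qed.

Lemma no_consec n1 n3 f i j : 3 <= n1 -> n3 %/ n1 = f -> 2 * (n3 %% n1) <= n1 ->
  1 <= i <= n1 -> 1 <= j <= n1 -> f < ell n1 n3 i -> f < ell n1 n3 j -> nxt n1 j != i.
Proof.
move=> h1 hq hr hi hj.
have n1p : 0 < n1 by lia.
have hrr : n3 %% n1 <= n1 - n3 %% n1 by lia.
rewrite (ell_form n3 n1p hi) (ell_form n3 n1p hj) hrr hq.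
case: ifP => [/andP[ci oi]|]; last lia.
case: ifP => [/andP[cj oj]|]; last lia.
move=> _ _; rewrite /nxt; case: (j =P n1) => [ej|nej].
- have en : n1 = 2 * (n3 %% n1) by lia.
  exfalso. have o1 : odd n1 = false by rewrite en oddM andFb.
  have o2 : odd n1.-1 by move: o1; rewrite -{1}(prednK n1p) /= => /negbFE.
  by move: oj; rewrite ej o2.
- apply/eqP => eij.
  have : odd j = ~~ odd j.-1 by rewrite -{1}(prednK (_ : 0 < j)) //; lia.
  have : i.-1 = j by lia.
  move=> e1 e2; move: oi; rewrite e1 e2; by move: oj => /negbTE ->.
Qed.

Lemma mem_ext n1 n3 (s : seq vtx) (F F' : nat -> nat -> vtx) :
  (forall i c, blk n1 n3 i c -> F i c = F' i c) ->
  (forall w, w \in s <-> exists i c, blk n1 n3 i c /\ w = F i c) ->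
  forall w, w \in s <-> exists i c, blk n1 n3 i c /\ w = F' i c.
Proof.
move=> e H w; rewrite H; split => [[i [c [B ->]]]|[i [c [B ->]]]]; exists i, c; split => //; by rewrite e.
Qed.

Lemma memW2 n1 n3 (sL sR : seq vtx) (gL gR : nat -> nat) :
  (forall w, w \in sL <-> exists i c, blk n1 n3 i c /\ w = mkv i (gL c) c) ->
  (forall w, w \in sR <-> exists i c, blk n1 n3 i c /\ w = mkv (nxt n1 i) (gR c) c) ->
  forall w, w \in sL ++ sR <-> exists i c, blk n1 n3 i c /\
     (w = mkv i (gL c) c \/ w = mkv (nxt n1 i) (gR c) c).
Proof.
move=> HL HR w; rewrite mem_cat; split.
- case/orP => [/HL|/HR] [i [c [B ->]]]; exists i, c; by split; [|auto].
- move=> [i [c [B [->|->]]]]; apply/orP; [left; apply/HL|right; apply/HR]; by exists i, c.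
Qed.

Lemma ell1_r n1 n3 : 0 < n1 -> 0 < n3 %% n1 -> ell n1 n3 1 = (n3 %/ n1).+1.
Proof.
move=> h r0; rewrite (ell_form n3 h (i:=1) ltac:(lia)) /=.
have -> : 0 < 2 * (n3 %% n1) by lia.
have -> : 0 < 2 * (n1 - n3 %% n1) by have := ltn_pmod n3 h; lia.
by case: ifP.
Qed.

Theorem mainTheorem7 (n1 n2 n3 : nat) (W : seq vtx) :
  3 <= n1 -> 3 <= n2 -> n1 <= n3 -> n2 <= n3 ->
  3 * maxn n1 n2 <= 2 * n3 -> 2 * n3 <= n1 * n2 ->
  middle_cone_output n1 n2 n3 W ->
  basic_landmark_system n1 n2 n3 W.
Proof.
move=> h1 h2 h13 h23 hmax hprod.
have n1p : 0 < n1 by lia.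
have n12 : 2 <= n1 by lia.
have hq := divn_eq n3 n1. have hr := ltn_pmod n3 n1p.
have q1 : 0 < n3 %/ n1 by rewrite divn_gt0.
have m1 : 3 * n1 <= 2 * n3 by lia.
have m2 : 3 * n2 <= 2 * n3 by lia.
have Br : forall i c, blk n1 n3 i c -> (1 <= i <= n1) && (1 <= c <= n3).
  by move=> i c; apply: blk_range.
have Bu : forall i j c, blk n1 n3 i c -> blk n1 n3 j c -> i = j.
  by move=> i j c; apply: blk_uniq.
have Bcov : forall c, 1 <= c <= n3 -> exists i, blk n1 n3 i c.
  by move=> c; apply: blk_cover.
have Bn : forall i, 1 <= i <= n1 -> exists c, blk n1 n3 i c.
  by move=> i hi; exists (sfirst n1 n3 i); apply: blk_first.
have ellb := fun i => @ell_bounds n1 n3 i n1p.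
rewrite /middle_cone_output.
have oddf : odd n2 -> [/\ n2 = 2 * fodd n2 + 1, 1 <= fodd n2, n3 %/ n1 <= fodd n2 &
                         forall i, 1 <= i <= n1 -> ell n1 n3 i <= (fodd n2).+1].
  move=> on2; have n2e := fodd_eq on2. have qf := odd_q_le_f n1p on2 hprod.
  split => //; first lia. move=> i hi; have := ellb i hi; lia.
have yLo : odd n2 -> forall c, yL n1 n2 n3 c = gLo n2 (inS n1 n2 n3) c.
  by move=> on2 c; rewrite /yL on2.
have yRo : odd n2 -> forall c, yR n1 n2 n3 c = gRo n2 (inS n1 n2 n3) c.
  by move=> on2 c; rewrite /yR on2.
case: ifP => [/andP[on2 k1] | hcase].
-
  move=> [x0 [z0 [Hx0 Hnot ->]]].
  have [n2e f1 qf Hell] := oddf on2.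
  set f := fodd n2 in n2e f1 qf Hell.
  have inS1 c : inS n1 n2 n3 c = (c == 1) by rewrite /inS ifN //; lia.
  have ell1 : 2 <= ell n1 n3 1.
    case: (posnP (n3 %% n1)) => r0.
    - have := ellb 1 ltac:(lia). have : 2 <= n3 %/ n1 by nia. lia.
    - rewrite ell1_r //; lia.
  have sf1 := sfirst1 n1 n3.
  have B11 : blk n1 n3 1 1 by rewrite /blk sf1; lia.
  have B12 : blk n1 n3 1 2 by rewrite /blk sf1; lia.
  have sfi1 i : 1 <= i <= n1 -> sfirst n1 n3 i = 1 -> i = 1.
    move=> hi e; have := blk_first n1p h13 hi; rewrite e => B; exact: Bu B B11.
  move: Hx0 Hnot => /memWL [i [c [Bc [-> e1 ->]]]].
  rewrite !inE => /norP[ni1 /norP[ni2 _]].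
  have yc : gLo n2 (inS n1 n2 n3) c = 1 by rewrite -yLo.
  have P1e c' : P1of (inS n1 n2 n3) c' = (c' == 2).
    rewrite /P1of inS1; case: c' => [|[|[|c']]] //.
  have Hst : forall c0, inS n1 n2 n3 c0 -> exists2 j, 1 <= j <= n1 &
      (c0 == sfirst n1 n3 j) && (2 <= ell n1 n3 j).
    move=> c0; rewrite inS1 => /eqP ->; exists 1; [lia| by rewrite sf1 eqxx ell1].
  have Hlong : forall i, 1 <= i <= n1 -> ell n1 n3 i = f.+1 -> inS n1 n2 n3 (sfirst n1 n3 i).
    move=> i0 hi el; rewrite inS1; apply/eqP; case: (i0 =P 1) => [->//|ni].
    have hl := ell_le1 n3 n1p hi.
    have : 2 <= kcount n1 n2 n3.
      apply: (count_ge2 (x := 1) (y := i0) (iota_uniq _ _)); rewrite ?mem_iota /=; try lia.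
    move=> k; exfalso; lia.
  have Hnc : forall i j, 1 <= i <= n1 -> 1 <= j <= n1 -> inS n1 n2 n3 (sfirst n1 n3 i) ->
      inS n1 n2 n3 (sfirst n1 n3 j) -> nxt n1 j != i.
    move=> i0 j hi hj; rewrite !inS1 => /eqP/(sfi1 i0 hi) -> /eqP/(sfi1 j hj) ->.
    rewrite /nxt; case: ifP => /eqP; lia.
  have HN : 3 * f <= count (fun c0 => ~~ inS n1 n2 n3 c0) (iota 1 n3).
    have -> : iota 1 n3 = 1 :: iota 2 (n3 - 1).
      by move: h13; case: (n3) => [|m] /= hm; [lia | rewrite subSS subn0].
    rewrite /= inS1 /= (eq_in_count (a2 := predT)) ?count_predT ?size_iota; first lia.
    move=> x; rewrite mem_iota inS1 /=; lia.
  have HN1 : 2 * f <= count (fun c0 => ~~ P1of (inS n1 n2 n3) c0) (iota 1 n3).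
    have -> : iota 1 n3 = 1 :: 2 :: iota 3 (n3 - 2).
      by move: h13; case: (n3) => [|[|m]] /= hm; [lia | lia | rewrite !subSS subn0].
    rewrite /= !P1e /= (eq_in_count (a2 := predT)) ?count_predT ?size_iota; first lia.
    move=> x; rewrite mem_iota P1e /=; lia.
  have Hmod : forall c0, blk n1 n3 i c0 -> ~~ inS n1 n2 n3 c0.
    move=> c0 B0; rewrite inS1; apply/eqP => e0; rewrite e0 in B0.
    by move: ni1; rewrite (Bu _ _ _ B0 B11).
  have Hmod2 : forall j c0, blk n1 n3 j c0 -> P1of (inS n1 n2 n3) c0 -> nxt n1 j != i.
    move=> j c0 B0; rewrite P1e => /eqP e0; rewrite e0 in B0.
    rewrite (Bu _ _ _ B0 B12) /nxt; case: ifP => /eqP; [lia|move=> _; by rewrite eq_sym].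
  have Hmod3 : ~~ P1of (inS n1 n2 n3) c.
    rewrite P1e; apply/eqP => e0; rewrite e0 in Bc.
    by move: ni1; rewrite (Bu _ _ _ Bc B12).
  have Hex : exists c0, inS n1 n2 n3 c0 by exists 1; rewrite inS1.
  have [G1 G2 G3 G4a [G4b G4c]] := odd_main (P := inS n1 n2 n3) (z0 := c) h1 h13 on2 h2 Hell Hst Hlong Hnc
    Hex HN HN1
    (or_intror (ex_intro _ i (And5 Bc yc Hmod Hmod2 Hmod3))).
  apply: (generic n12 Br Bu Bcov Bn _ G1 G2 G3 G4a G4b G4c).
    apply: memW2.
    * apply: (mem_ext (F := fun i c0 => mkv i (if c0 == c then n2 else yL n1 n2 n3 c0) c0)).
        by move=> i0 c0 _; rewrite /gLm yLo.
      apply: mem_modify => //. exact: memWL.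
    * apply: (mem_ext (F := fun i c0 => mkv (nxt n1 i) (yR n1 n2 n3 c0) c0)).
        by move=> i0 c0 _; rewrite yRo.
      exact: memWR.
- move=> ->.
  case on2: (odd n2).
  +
    have k2 : 2 <= kcount n1 n2 n3 by move: hcase; rewrite on2 /=; lia.
    have [n2e f1 qf Hell] := oddf on2.
    set f := fodd n2 in n2e f1 qf Hell.
    have inSe c : inS n1 n2 n3 c = has (fun i => (f < ell n1 n3 i) && (sfirst n1 n3 i == c)) (iota 1 n1)
      by rewrite /inS k2.
    have [i0 hi0 li0] : exists2 i, 1 <= i <= n1 & f < ell n1 n3 i.
      have : has (fun i => f < ell n1 n3 i) (iota 1 n1) by rewrite has_count; apply: ltnW.
      by move/hasP => [i]; rewrite mem_iota => hi li; exists i => //; lia.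
    have qe : n3 %/ n1 = f by have := ellb i0 hi0; lia.
    have r2 : 2 * (n3 %% n1) <= n1.
      rewrite qe in hq. nia.
    have inS_st c : inS n1 n2 n3 c -> exists2 j, 1 <= j <= n1 & (f < ell n1 n3 j) && (sfirst n1 n3 j == c).
      by rewrite inSe => /hasP [j]; rewrite mem_iota => hj hh; exists j => //; lia.
    have inS_l i : 1 <= i <= n1 -> f < ell n1 n3 i -> inS n1 n2 n3 (sfirst n1 n3 i).
      by move=> hi li; rewrite inSe; apply/hasP; exists i; rewrite ?mem_iota ?li ?eqxx //; lia.
    have inS_blk i x : blk n1 n3 i x -> inS n1 n2 n3 x -> f < ell n1 n3 i /\ x = sfirst n1 n3 i.
      move=> Bx /inS_st [j hj /andP[lj /eqP ej]].
      have Bj := blk_first n1p h13 hj. rewrite ej in Bj. have e := Bu _ _ _ Bx Bj. subst j. by [].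
    have Hst : forall c0, inS n1 n2 n3 c0 -> exists2 j, 1 <= j <= n1 &
        (c0 == sfirst n1 n3 j) && (2 <= ell n1 n3 j).
      move=> c0 Pc; have [j hj /andP[lj /eqP ej]] := inS_st c0 Pc; exists j => //.
      rewrite ej eqxx /=; lia.
    have Hlong : forall i, 1 <= i <= n1 -> ell n1 n3 i = f.+1 -> inS n1 n2 n3 (sfirst n1 n3 i).
      move=> i hi el; apply: inS_l => //; lia.
    have Hnc : forall i j, 1 <= i <= n1 -> 1 <= j <= n1 -> inS n1 n2 n3 (sfirst n1 n3 i) ->
        inS n1 n2 n3 (sfirst n1 n3 j) -> nxt n1 j != i.
      move=> i j hi hj Pi Pj.
      have [li _] := inS_blk i _ (blk_first n1p h13 hi) Pi.
      have [lj _] := inS_blk j _ (blk_first n1p h13 hj) Pj.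
      exact: (no_consec h1 qe r2 hi hj li lj).
    have Hex : exists c0, inS n1 n2 n3 c0 by exists (sfirst n1 n3 i0); exact: inS_l.
    have HN : 3 * f <= count (fun c0 => ~~ inS n1 n2 n3 c0) (iota 1 n3).
      rewrite (decomp _ _ n1p); apply: (@leq_trans (f * size (iota 1 n1))); first by rewrite size_iota; nia.
      apply: sumn_ge.
      move=> i; rewrite mem_iota => hi.
      apply: (block_bound (x0 := sfirst n1 n3 i)) => //.
      - have := ellb i ltac:(lia); lia.
      - move=> x Bx Px; exact: inS_blk Bx Px.
    have HN1 : 2 * f <= count (fun c0 => ~~ P1of (inS n1 n2 n3) c0) (iota 1 n3).
      rewrite (decomp _ _ n1p); apply: (@leq_trans (f * size (iota 1 n1))); first by rewrite size_iota; nia.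
      apply: sumn_ge.
      move=> i; rewrite mem_iota => hi.
      apply: (block_bound (x0 := (sfirst n1 n3 i).+1)) => //.
      - have := ellb i ltac:(lia); lia.
      - move=> x Bx /andP[x1 Px].
        have [j hj /andP[lj /eqP ej]] := inS_st _ Px.
        have Bj : blk n1 n3 j x by rewrite /blk hj /=; lia.
        have e := Bu _ _ _ Bx Bj. rewrite -e in lj ej. split => //; lia.
    have [G1 G2 G3 G4a [G4b G4c]] := odd_main (P := inS n1 n2 n3) (z0 := 0) h1 h13 on2 h2 Hell
      Hst Hlong Hnc Hex HN HN1 (or_introl erefl).
    apply: (generic n12 Br Bu Bcov Bn _ G1 G2 G3 G4a G4b G4c).
    apply: memW2.
    * apply: (mem_ext (F := fun i c0 => mkv i (yL n1 n2 n3 c0) c0)); last exact: memWL.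
      move=> i c0 B0; have /andP[_ /andP[c01 _]] := Br _ _ B0.
      rewrite /gLm yLo //; case: eqP => //; lia.
    * apply: (mem_ext (F := fun i c0 => mkv (nxt n1 i) (yR n1 n2 n3 c0) c0)); last exact: memWR.
      by move=> ii c0 _; rewrite yRo.
  +
    have ev : ~~ odd n2 by rewrite on2.
    have n2e : n2 = 2 * (n2 %/ 2).
      have := divn_eq n2 2; have : n2 %% 2 = 0 by rewrite modn2 on2. lia.
    have Hell : forall i, 1 <= i <= n1 -> ell n1 n3 i <= n2 %/ 2.
      move=> i hi; have := ellb i hi; case: (ell n1 n3 i =P (n3 %/ n1).+1) => e.
      * have r0 := ell_long_r n1p hi e. rewrite e. nia.
      * nia.
    have [G1 G2 G3 G4a [G4b G4c]] := even_main n1p ev h2 h23 Hell.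
    apply: (generic n12 Br Bu Bcov Bn _ G1 G2 G3 G4a G4b G4c).
    apply: memW2.
    * apply: (mem_ext (F := fun i c0 => mkv i (yL n1 n2 n3 c0) c0)); last exact: memWL.
      by move=> i0 c0 _; rewrite /yL on2.
    * apply: (mem_ext (F := fun i c0 => mkv (nxt n1 i) (yR n1 n2 n3 c0) c0)); last exact: memWR.
      by move=> i0 c0 _; rewrite /yR on2.
Qed.
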